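(* Let $(X,\alpha)$ be a Cantor minimal system and let $c:X\to\mathbb{Z}_2$ be a continuous map. Suppose $PS(\alpha)\neq PS(\alpha\times c)$. Then there exists $n\in\mathbb{N}$ such that $2^{n-1}\in PS(\alpha)$, $2^n\notin PS(\alpha)$ and $PS(\alpha\times c)=2PS(\alpha)\cup PS(\alpha)$. Furthermore, if $f\in C(X,\mathbb{Z})$ satisfies $2^{n-1}[f]=[1_X]$ in $K^0(X,\alpha)$, then $[c]=[f]+2K^0(X,\alpha)$ in $K^0(X,\alpha)/2K^0(X,\alpha)$.
   Context: A Cantor minimal system $(X,\alpha)$ is a Cantor set $X$ with a homeomorphism $\alpha$ having no nontrivial closed invariant subsets. $\mathbb{N}=\{1,2,\dots\}$. $\alpha\times c$ is the homeomorphism $(x,k)\mapsto(\alpha(x),k+c(x))$ of $X\times\mathbb{Z}_2$. $K^0(X,\alpha)=C(X,\mathbb{Z})/\{f-f\circ\alpha^{-1}:f\in C(X,\mathbb{Z})\}$ with class $[f]$; $K^0(X,\alpha)/2K^0(X,\alpha)$ is identified with $C(X,\mathbb{Z}_2)/\{f-f\circ\alpha^{-1}:f\in C(X,\mathbb{Z}_2)\}$, and $[c]$ is the class of $c$ (equivalently, the class mod $2K^0$ of the $\{0,1\}$-valued integer lift of $c$). For a homeomorphism $\gamma$ of a compact space $Z$, the periodic spectrum $PS(\gamma)$ is the set of $p\in\mathbb{N}$ for which there is a clopen $U\subset Z$ with $U,\gamma(U),\dots,\gamma^{p-1}(U)$ pairwise disjoint and covering $Z$. $2PS(\alpha)=\{2p:p\in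 PS(\alpha)\}$. *)

(* Defs.v *)
From HB Require Import structures.
From mathcomp Require Import all_boot all_order all_algebra.
From mathcomp Require Import all_classical all_reals topology cantor.
Set Implicit Arguments. Unset Strict Implicit. Unset Printing Implicit Defensive.
Import Order.TTheory GRing.Theory Num.Theory.
Local Open Scope classical_set_scope.

Definition is_cantor_set (X : topologicalType) : Prop :=
  exists (h : cantor_space -> X) (g : X -> cantor_space),
    [/\ cancel h g, cancel g h, continuous h & continuous g].

Definition cantor_minimal (X : topologicalType) (alpha alphai : X -> X) : Prop :=
  [/\ is_cantor_set X,
      cancel alpha alphai /\ cancel alphai alpha,
      continuous alpha, continuous alphai &
      (forall A : set X, closed A -> alpha @` A = A -> A = set0 \/ A = setT)].

(* Z_2 is modelled by bool (discrete topology), addition by xor. *)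
Definition skew_product (X : topologicalType) (alpha : X -> X) (c : X -> bool)
  : X * bool -> X * bool :=
  fun z => (alpha z.1, addb z.2 (c z.1)).

Definition periodic_spectrum (Z : topologicalType) (gamma : Z -> Z) : set nat :=
  [set p | (0 < p)%N /\ exists U : set Z, [/\ open U, closed U,
     (forall i j, (i < p)%N -> (j < p)%N -> i <> j ->
        (iter i gamma @` U) `&` (iter j gamma @` U) = set0) &
     (forall z, exists2 i, (i < p)%N & (iter i gamma @` U) z)]].

Definition cont_int (X : topologicalType) (f : X -> int) : Prop :=
  forall z : int, open (f @^-1` [set z]).

Definition cobound (X : topologicalType) (alphai : X -> X) (d : X -> int) : Prop :=
  exists h : X -> int, cont_int h /\ forall x, d x = (h x - h (alphai x))%R.

Definition lift01 (X : Type) (c : X -> bool) : X -> int := fun x => Posz (nat_of_bool (c x)).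

(* Main.v *)
Require Import Defs.
From HB Require Import structures.
From mathcomp Require Import all_boot all_order all_algebra.
From mathcomp Require Import all_classical all_reals topology cantor.
From mathcomp Require Import zify ring.
Import Order.TTheory GRing.Theory Num.Theory.
Local Open Scope classical_set_scope.
Local Open Scope ring_scope.

Set Implicit Arguments. Unset Strict Implicit.

Definition lc {T : topologicalType} {U : Type} (u : T -> U) :=
  forall x, nbhs x (u @^-1` [set u x]).

Lemma lc_open (T : topologicalType) (U : Type) (u : T -> U) (S : set U) :
  lc u -> open (u @^-1` S).
Proof.
move=> H; rewrite openE => x Sx; apply: filterS (H x) => y /= ->; exact: Sx.
Qed.

Lemma lc_closed (T : topologicalType) (U : Type) (u : T -> U) (S : set U) :
  lc u -> closed (u @^-1` S).
Proof.
move=> H; rewrite -openC.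
have -> : ~` (u @^-1` S) = u @^-1` (~` S) by rewrite preimage_setC.
exact: lc_open.
Qed.

Lemma cont_intP (T : topologicalType) (f : T -> int) : cont_int f <-> lc f.
Proof.
split=> H.
  move=> x; have := H (f x); rewrite openE => /(_ x erefl); done.
by move=> z; apply: lc_open.
Qed.

Lemma lc2 (T : topologicalType) (U V W : Type) (u : T -> U) (v : T -> V) (h : U -> V -> W) :
  lc u -> lc v -> lc (fun x => h (u x) (v x)).
Proof.
move=> Hu Hv x; apply: filterS (filterI (Hu x) (Hv x)) => y [/= -> ->]; done.
Qed.

Lemma lc1 (T : topologicalType) (U W : Type) (u : T -> U) (h : U -> W) :
  lc u -> lc (fun x => h (u x)).
Proof. by move=> Hu x; apply: filterS (Hu x) => y /= ->. Qed.

Lemma lc_cst (T : topologicalType) (U : Type) (a : U) : lc (fun _ : T => a).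
Proof. by move=> x; apply: filterS (filterT) => y. Qed.

Lemma lc_comp (T S : topologicalType) (U : Type) (u : S -> U) (phi : T -> S) :
  lc u -> continuous phi -> lc (fun x => u (phi x)).
Proof. by move=> Hu Hp x; have := Hp x (u @^-1` [set u (phi x)]) (Hu (phi x)). Qed.

Lemma lc_cont (T S : topologicalType) (u : T -> S) : lc u -> continuous u.
Proof.
move=> Hu x B HB; apply: filterS (Hu x) => y /= ->; exact: nbhs_singleton HB.
Qed.

Lemma lc_bool (T : topologicalType) (c : T -> bool) : continuous c -> lc c.
Proof.
move=> Hc; apply: (@lc_comp T bool bool id c) => // b.
by rewrite /nbhs /=.
Qed.

Lemma cont_fst (X Y : topologicalType) : continuous (@fst X Y).
Proof. by move=> [x y]; apply: cvg_fst. Qed.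
Lemma cont_snd (X Y : topologicalType) : continuous (@snd X Y).
Proof. by move=> [x y]; apply: cvg_snd. Qed.
Lemma cont_pair (X Y Z : topologicalType) (f : X -> Y) (g : X -> Z) :
  continuous f -> continuous g -> continuous (fun x => (f x, g x)).
Proof. by move=> Hf Hg x; apply: cvg_pair; [apply: Hf|apply: Hg]. Qed.

Lemma dvd_lin (p a b x u v k : int) : (p %| a)%Z -> (p %| b)%Z ->
  x = u * a + v * b + k * p -> (p %| x)%Z.
Proof.
move=> ha hb ->; rewrite rpredD // ?rpredD //; first by rewrite dvdz_mull.
  by rewrite dvdz_mull.
by rewrite dvdz_mull // dvdzz.
Qed.

Lemma small_dvd (p i j : nat) : (i < p)%N -> (j < p)%N ->
  (p%:Z %| i%:Z - j%:Z)%Z -> i = j.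
Proof.
move=> ip jp; rewrite /dvdz /= => h.
have [e|ne] := eqVneq (absz (i%:Z - j%:Z)) 0%N; first by lia.
have := dvdn_leq _ h; rewrite lt0n ne => /(_ isT) => h2; lia.
Qed.

Definition PSF {Z : topologicalType} (g : Z -> Z) (p : nat) : Prop :=
  (0 < p)%N /\ exists F : Z -> int, lc F /\ forall z, (p%:Z %| F (g z) - F z - 1)%Z.

Lemma iter_cancel (A : Type) (f g : A -> A) : cancel f g -> forall n, cancel (iter n f) (iter n g).
Proof.
move=> fg n; elim: n => // n IH x.
by rewrite [iter n.+1 f x]iterSr /= IH fg.
Qed.

Lemma img_pre (A : Type) (f g : A -> A) (U : set A) n : cancel f g -> cancel g f ->
  iter n f @` U = iter n g @^-1` U.
Proof.
move=> fg gf; apply/seteqP; split => z.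
  by case=> u Uu <-; rewrite /preimage /= iter_cancel.
move=> Uz; exists (iter n g z) => //; exact: iter_cancel.
Qed.

Lemma open_iter_pre (Z : topologicalType) (g : Z -> Z) n (A : set Z) :
  continuous g -> open A -> open (iter n g @^-1` A).
Proof.
move=> cg; elim: n A => // n IH A oA.
exact: (IH _ (proj1 (continuousP g) cg A oA)).
Qed.

Lemma PS_to_PSF (Z : topologicalType) (g gi : Z -> Z) : cancel g gi -> cancel gi g ->
  continuous gi -> forall p, periodic_spectrum g p -> PSF g p.
Proof.
move=> ggi gig cgi p [p0 [U [oU cU dis cov]]]; split=> //.
have E n : iter n g @` U = iter n gi @^-1` U by apply: img_pre.
have cov' : forall z, exists i, (i < p)%N /\ U (iter i gi z).
  move=> z; have [i ip] := cov z; rewrite E => h; by exists i.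
have uniq : forall z i j, (i < p)%N -> (j < p)%N -> U (iter i gi z) -> U (iter j gi z) -> i = j.
  move=> z i j ip jp hi hj; apply: contrapT => ij.
  have := dis i j ip jp ij; rewrite !E => /seteqP [h _].
  exact: (h z (conj hi hj)).
have [f Hf] := choice cov'.
exists (fun z => (f z)%:Z); split.
  apply: (@lc1 _ _ _ f (fun n : nat => Posz n)) => x.
  have o : open (iter (f x) gi @^-1` U) by apply: open_iter_pre.
  rewrite openE in o; have := o x (proj2 (Hf x)); apply: filterS => y /= Uy.
  exact: (uniq y _ _ (Hf y).1 (Hf x).1 (Hf y).2 Uy).
move=> z; case: (ltnP (f z).+1 p) => h.
  have -> : f (g z) = (f z).+1.
    apply: (uniq (g z) _ _ (Hf (g z)).1 h (Hf (g z)).2).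
    by rewrite iterSr ggi; exact: (Hf z).2.
  apply/dvdzP; exists 0; lia.
have fz : (f z).+1 = p by have := (Hf z).1; lia.
have -> : f (g z) = 0%N.
  case e: (f (g z)) => [//|j].
  have jp : (j < p)%N by have := (Hf (g z)).1; lia.
  have Uj : U (iter j gi z) by have := (Hf (g z)).2; rewrite e iterSr ggi.
  have := (Hf (g z)).1; rewrite e => hj.
  have := uniq z _ _ jp (Hf z).1 Uj (Hf z).2; lia.
apply/dvdzP; exists (-1); lia.
Qed.

Lemma PSF_to_PS (Z : topologicalType) (g gi : Z -> Z) : cancel g gi -> cancel gi g ->
  forall p, PSF g p -> periodic_spectrum g p.
Proof.
move=> ggi gig p [p0 [F [lF HF]]]; split=> //.
have HFi z : (p%:Z %| F z - F (gi z) - 1)%Z by have := HF (gi z); rewrite gig.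
have Hit : forall n z, (p%:Z %| F z - F (iter n gi z) - n%:Z)%Z.
  elim=> [|n IH] z; first by apply/dvdzP; exists 0; rewrite /=; lia.
  apply: (@dvd_lin _ _ _ _ 1 1 0 (IH z) (HFi (iter n gi z))) => /=; lia.
have E n U : iter n g @` U = iter n gi @^-1` U by apply: img_pre.
exists (F @^-1` [set k | (p%:Z %| k)%Z]); split.
- exact: lc_open.
- exact: lc_closed.
- move=> i j ip jp ij; rewrite !E; apply/seteqP; split=> // z [/= hi hj].
  apply: ij; apply: (@small_dvd p i j ip jp).
  have -> : i%:Z - j%:Z = (F z - F (iter j gi z) - j%:Z) - (F z - F (iter i gi z) - i%:Z)
     - (F (iter i gi z) - F (iter j gi z)) by ring.
  by apply: rpredB; [apply: rpredB; apply: Hit | apply: rpredB].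
- move=> z; have pn0 : p%:Z != 0 by rewrite eqz_nat -lt0n.
  have m0 := modz_ge0 (F z) pn0.
  have mp : (F z %% p)%Z < p%:Z by apply: ltz_pmod; rewrite ltz_nat.
  have dz := divz_eq (F z) p.
  have ea : (absz (F z %% p)%Z)%:Z = (F z %% p)%Z by rewrite gez0_abs.
  exists (absz (F z %% p)%Z); first by rewrite -ltz_nat ea.
  rewrite E /preimage /=.
  set i := absz _ in ea *.
  have -> : F (iter i gi z) = - (F z - F (iter i gi z) - i%:Z) + (F z %/ p)%Z * p.
    rewrite ea; set q := (F z %/ p)%Z in dz *; set r := (F z %% p)%Z in dz *.
    rewrite [in RHS]dz; ring.
  by rewrite rpredD ?rpredN // dvdz_mull.
Qed.

Lemma dvd_iff (p a b : int) : (p %| a - b)%Z -> (p %| a)%Z = (p %| b)%Z.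
Proof. move=> h; have -> : a = (a - b) + b by ring. by rewrite rpredDl. Qed.

Lemma coprimez_nat (m n : nat) : coprimez m n = coprime m n.
Proof. by rewrite /coprimez /gcdz /= eqz_nat. Qed.

Lemma odd_mod2 (k : int) : exists j, k = j * 2 \/ k = j * 2 + 1.
Proof.
exists (k %/ 2)%Z; have := divz_eq k 2.
have h0 := @modz_ge0 k 2 isT; have h1 := @ltz_pmod k 2 isT.
set r := (k %% 2)%Z in h0 h1 *; set j := (k %/ 2)%Z => ek.
have : r = 0 \/ r = 1 by lia.
by case=> er; rewrite ek er; [left; ring | right].
Qed.

Lemma even_case (p : nat) (a : int) : (0 < p)%N -> (p%:Z %| 2 * a)%Z -> ~~ (p%:Z %| a)%Z ->
  exists q : nat, p = (2 * q)%N /\ (0 < q)%N /\ ((2 * q)%N%:Z %| a - q%:Z)%Z.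
Proof.
move=> p0 h2 ha.
have ev : ~~ odd p.
  apply/negP => op; move/negP: ha; apply.
  have cp : coprimez p 2 by rewrite (coprimez_nat p 2) coprime_sym coprime2n.
  by rewrite -(Gauss_dvdzr _ cp).
have pq : p = (2 * p./2)%N by rewrite -[LHS]odd_double_half (negbTE ev) mul2n.
move: pq; set q := p./2 => pq.
exists q; split=> //; split; first lia.
move: h2 ha; rewrite pq PoszM => h2 ha.
rewrite dvdz_mul2l // in h2.
case/dvdzP: h2 => k ek; subst a.
have [j [ej|ej]] := odd_mod2 k; subst k.
  by move/negP: ha; case; apply/dvdzP; exists j; ring.
by apply/dvdzP; exists j; ring.
Qed.

Lemma odd_decomp (n : nat) : (0 < n)%N -> exists v u, n = (2 ^ v * u)%N /\ odd u.
Proof.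
elim: n {-2}n (leqnn n) => [|N IH] n hn n0; first by lia.
case on: (odd n); first by exists 0%N, n; rewrite expn0 mul1n.
have e : n = (2 * n./2)%N by rewrite -[LHS]odd_double_half on mul2n.
have [v [u [eu ou]]] : exists v u, n./2 = (2 ^ v * u)%N /\ odd u by apply: IH; lia.
exists v.+1, u; split=> //; rewrite e eu expnS; lia.
Qed.

Lemma dvdz_natE (d m : nat) : (d%:Z %| m%:Z)%Z = (d %| m)%N.
Proof. by []. Qed.

Lemma minimal_all (X : topologicalType) (alpha alphai : X -> X) (A : set X) :
  cantor_minimal alpha alphai -> closed A -> (forall x, A (alpha x) <-> A x) ->
  forall x0, A x0 -> forall x, A x.
Proof.
case=> _ [aai aia] _ _ hmin cA hinv x0 Ax0.
have e : alpha @` A = A.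
  apply/seteqP; split=> [y [x Ax <-]|x Ax]; first by apply/hinv.
  by exists (alphai x) => //; apply/hinv; rewrite aia.
case: (hmin A cA e) => eA; last by rewrite eA.
by move: Ax0; rewrite eA.
Qed.

Lemma torsion_free (X : topologicalType) (alpha alphai : X -> X) (m : nat) (k : X -> int) :
  cantor_minimal alpha alphai -> (0 < m)%N -> lc k ->
  (forall x, (m%:Z %| k x - k (alphai x))%Z) ->
  exists k', lc k' /\ forall x, k x - k (alphai x) = m%:Z * (k' x - k' (alphai x)).
Proof.
move=> hm m0 lk hk.
have [[x0 _]|ne] := pselect (exists x : X, True); last first.
  exists (fun _ => 0); split; first exact: lc_cst.
  by move=> x; exfalso; apply: ne; exists x.
have [_ [aai aia] _ _ _] := hm.
set r := k x0.
have all : forall x, (m%:Z %| k x - r)%Z.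
  apply: (@minimal_all X alpha alphai (k @^-1` [set z | (m%:Z %| z - r)%Z]) hm _ _ x0) => /=.
  - exact: lc_closed.
  - move=> x; have := hk (alpha x); rewrite aai => h.
    rewrite (@dvd_iff _ _ (k x - r)) //.
    by have -> : k (alpha x) - r - (k x - r) = k (alpha x) - k x by ring.
  - by rewrite subrr dvdz0.
exists (fun x => ((k x - r) %/ m)%Z); split.
  exact: (@lc1 _ _ _ k (fun z => ((z - r) %/ m)%Z) lk).
move=> x; have e1 := divzK (all x); have e2 := divzK (all (alphai x)).
rewrite mulrBr ![m%:Z * _]mulrC e1 e2; ring.
Qed.

Definition skewi (X : Type) (alphai : X -> X) (c : X -> bool) : X * bool -> X * bool :=
  fun y => (alphai y.1, addb y.2 (c (alphai y.1))).
Arguments skewi {X}.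

Lemma skew_cancel (X : topologicalType) (alpha alphai : X -> X) (c : X -> bool) :
  cancel alpha alphai -> cancel alphai alpha ->
  cancel (skew_product alpha c) (skewi alphai c) /\ cancel (skewi alphai c) (skew_product alpha c).
Proof.
move=> aai aia; split=> -[x k]; rewrite /skew_product /skewi /=.
  by rewrite aai addbK.
by rewrite aia addbK.
Qed.

Lemma cont_comp_fst (X : topologicalType) (f : X -> X) :
  continuous f -> continuous (fun y : X * bool => f y.1).
Proof. move=> cf y; apply: continuous_comp; [exact: cont_fst | exact: cf]. Qed.

Lemma skewi_cont (X : topologicalType) (alphai : X -> X) (c : X -> bool) :
  continuous alphai -> continuous c -> continuous (skewi alphai c).
Proof.
move=> ca cc; apply: cont_pair; first exact: cont_comp_fst.
apply: lc_cont.
apply: (@lc2 _ _ _ _ (fun y : X * bool => y.2) (fun y => c (alphai y.1)) addb).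
  exact: lc_bool (@cont_snd X bool).
exact: (lc_comp (lc_bool cc) (cont_comp_fst ca)).
Qed.

Lemma lc_sect (X : topologicalType) (F : X * bool -> int) (b : bool) :
  lc F -> lc (fun x => F (x, b)).
Proof.
move=> lF; apply: (lc_comp lF).
by apply: cont_pair => x; [exact: cvg_id | exact: cvg_cst].
Qed.

Definition Wq (X : topologicalType) (alpha : X -> X) (c : X -> bool) (q : nat) :=
  exists H : X -> int, lc H /\
    forall x, ((2 * q)%N%:Z %| H (alpha x) - H x - 1 + lift01 c x * q%:Z)%Z.

Lemma F1 (X : topologicalType) (alpha : X -> X) (c : X -> bool) p :
  PSF alpha p -> PSF (skew_product alpha c) p.
Proof.
case=> p0 [F [lF HF]]; split=> //; exists (fun y => F y.1); split.
  exact: (lc_comp lF (@cont_fst X bool)).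
by move=> [x k]; exact: HF.
Qed.

Lemma F3 (X : topologicalType) (alpha : X -> X) (c : X -> bool) q :
  (0 < q)%N -> Wq alpha c q -> PSF (skew_product alpha c) (2 * q).
Proof.
move=> q0 [H [lH HH]]; split; first lia.
exists (fun y => H y.1 + (nat_of_bool y.2)%:Z * q%:Z); split.
  apply: (@lc2 _ _ _ _ (fun y : X * bool => H y.1) (fun y => y.2)
     (fun a (b : bool) => a + (nat_of_bool b)%:Z * q%:Z)).
    exact: (lc_comp lH (@cont_fst X bool)).
  exact: lc_bool (@cont_snd X bool).
move=> [x k] /=; have h := HH x.
apply: (@dvd_lin _ _ _ _ 1 1 (- (nat_of_bool k)%:Z * (nat_of_bool (c x))%:Z) h (dvdz0 _)).
rewrite /skew_product /lift01 /= PoszM.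
by case: k; case: (c x) => /=; ring.
Qed.

Lemma F4 (X : topologicalType) (alpha : X -> X) (c : X -> bool) q :
  (0 < q)%N -> Wq alpha c q -> PSF alpha q.
Proof.
move=> q0 [H [lH HH]]; split=> //; exists H; split=> // x.
have h : (q%:Z %| H (alpha x) - H x - 1 + lift01 c x * q%:Z)%Z.
  apply: dvdz_trans (HH x); rewrite PoszM; exact: dvdz_mull (dvdzz _).
apply: (@dvd_lin _ _ _ _ 1 (- lift01 c x) 0 h (dvdzz _)); ring.
Qed.

Lemma F5 (X : topologicalType) (alpha : X -> X) p d :
  PSF alpha p -> (d %| p)%N -> (0 < d)%N -> PSF alpha d.
Proof.
move=> [p0 [F [lF HF]]] dp d0; split=> //; exists F; split=> // x.
apply: dvdz_trans (HF x); by rewrite dvdz_natE.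
Qed.

Lemma F6 (X : topologicalType) (alpha : X -> X) p1 p2 :
  PSF alpha p1 -> PSF alpha p2 -> coprime p1 p2 -> PSF alpha (p1 * p2).
Proof.
move=> [p10 [F1 [l1 H1]]] [p20 [F2 [l2 H2]]] cop; split; first by rewrite muln_gt0 p10.
have [u [v eB]] := Bezoutz p1 p2.
have g1 : gcdz p1 p2 = 1 by rewrite /gcdz /=; move/eqP: cop => ->.
rewrite g1 in eB.
exists (fun x => F1 x * (v * p2%:Z) + F2 x * (u * p1%:Z)); split.
  exact: (@lc2 _ _ _ _ F1 F2 (fun a b => a * (v * p2%:Z) + b * (u * p1%:Z))).
move=> x.
have -> : F1 (alpha x) * (v * p2%:Z) + F2 (alpha x) * (u * p1%:Z) -
   (F1 x * (v * p2%:Z) + F2 x * (u * p1%:Z)) - 1 =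
   (F1 (alpha x) - F1 x - 1) * (v * p2%:Z) + (u * p1%:Z) * (F2 (alpha x) - F2 x - 1)
   + (u * p1%:Z + v * p2%:Z - 1) by ring.
rewrite eB subrr addr0 PoszM.
apply: rpredD.
  by apply: dvdz_mul; [exact: H1 | exact: dvdz_mull (dvdzz _)].
by rewrite [p1%:Z * _]mulrC [(u * _) * _]mulrC; apply: dvdz_mul; [exact: H2 | exact: dvdz_mull (dvdzz _)].
Qed.

Lemma F7a (X : topologicalType) (alpha : X -> X) (c : X -> bool) q v u :
  Wq alpha c q -> q = (2 ^ v * u)%N -> odd u -> Wq alpha c (2 ^ v).
Proof.
move=> [H [lH HH]] eq ou; exists H; split=> // x.
have eu : u%:Z = 2 * (u./2)%:Z + 1 by have := odd_double_half u; rewrite ou; lia.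
have h := HH x; rewrite eq !PoszM in h *.
have h' : ((2%:Z * (2 ^ v)%N%:Z) %| H (alpha x) - H x - 1 + lift01 c x * ((2 ^ v)%N%:Z * u%:Z))%Z.
  apply: dvdz_trans h; rewrite mulrA; exact: dvdz_mulr (dvdzz _).
apply: (@dvd_lin _ _ _ _ 1 0 (- lift01 c x * (u./2)%:Z) h' (dvdz0 _)).
rewrite eu; ring.
Qed.

Lemma F7b (X : topologicalType) (alpha : X -> X) (c : X -> bool) r t :
  Wq alpha c r -> PSF alpha t -> odd t -> coprime (2 * r) t -> Wq alpha c (r * t).
Proof.
move=> [H [lH HH]] [t0 [K [lK HK]]] ot cop.
have [a [b eB]] := Bezoutz (2 * r)%N t.
have g1 : gcdz (2 * r)%N t = 1 by rewrite /gcdz /=; move/eqP: cop => ->.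
rewrite g1 in eB.
have et : t%:Z = 2 * (t./2)%:Z + 1 by have := odd_double_half t; rewrite ot; lia.
exists (fun x => H x * (b * t%:Z) + K x * (a * (2 * r)%N%:Z)); split.
  exact: (@lc2 _ _ _ _ H K (fun h k => h * (b * t%:Z) + k * (a * (2 * r)%N%:Z))).
move=> x.
have E : H (alpha x) * (b * t%:Z) + K (alpha x) * (a * (2 * r)%N%:Z) -
    (H x * (b * t%:Z) + K x * (a * (2 * r)%N%:Z)) - 1 + lift01 c x * (r * t)%N%:Z =
  (H (alpha x) - H x - 1 + lift01 c x * r%:Z) * (b * t%:Z)
  + (a * (2 * r)%N%:Z) * (K (alpha x) - K x - 1)
  + (lift01 c x * (a * r%:Z + b * (t./2)%:Z)) * ((2 * r)%N%:Z * t%:Z)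
  + (a * (2 * r)%N%:Z + b * t%:Z - 1) * (1 - lift01 c x * r%:Z * t%:Z).
  by rewrite !PoszM et; ring.
rewrite E eB subrr mul0r addr0 (_ : (2 * (r * t))%N = ((2 * r) * t)%N) ?mulnA // (PoszM (2 * r) t).
apply: rpredD; first apply: rpredD.
- by apply: dvdz_mul; [exact: HH | exact: dvdz_mull (dvdzz _)].
- by apply: dvdz_mul; [exact: dvdz_mull (dvdzz _) | exact: HK].
- exact: dvdz_mull (dvdzz _).
Qed.

Lemma F2 (X : topologicalType) (alpha alphai : X -> X) (c : X -> bool) p :
  cantor_minimal alpha alphai -> continuous c -> PSF (skew_product alpha c) p ->
  PSF alpha p \/ exists q, p = (2 * q)%N /\ (0 < q)%N /\ Wq alpha c q.
Proof.
move=> hm cc [p0 [F [lF HF]]].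
have [_ [aai aia] ca cai _] := hm.
have l0 : lc (fun x => F (x, false)) := lc_sect false lF.
have l1 : lc (fun x => F (x, true)) := lc_sect true lF.
have h0 x : (p%:Z %| F (alpha x, c x) - F (x, false) - 1)%Z by have := HF (x, false).
have h1 x : (p%:Z %| F (alpha x, ~~ c x) - F (x, true) - 1)%Z by have := HF (x, true).
pose D := fun x => F (x, true) - F (x, false).
have lD : lc D := @lc2 _ _ _ _ _ _ (fun a b => a - b) l1 l0.
have hD x : if c x then (p%:Z %| D (alpha x) + D x)%Z else (p%:Z %| D (alpha x) - D x)%Z.
  move: (h0 x) (h1 x); case: (c x) => /= a0 a1.
    by apply: (@dvd_lin _ _ _ _ 1 (-1) 0 a0 a1); rewrite /D; ring.
  by apply: (@dvd_lin _ _ _ _ (-1) 1 0 a0 a1); rewrite /D; ring.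
have [[x0 _]|ne] := pselect (exists x : X, True); last first.
  left; split=> //; exists (fun _ => 0); split; first exact: lc_cst.
  by move=> x; exfalso; apply: ne; exists x.
pose a := D x0.
have allA : forall x, (p%:Z %| D x - a)%Z || (p%:Z %| D x + a)%Z.
  apply: (@minimal_all X alpha alphai (fun x => (p%:Z %| D x - a)%Z || (p%:Z %| D x + a)%Z) hm _ _ x0).
  - exact: (@lc_closed X int D [set k | (p%:Z %| k - a)%Z || (p%:Z %| k + a)%Z] lD).
  - move=> x; have := hD x; case: (c x) => hd.
      rewrite (@dvd_iff _ (D (alpha x) - a) (- (D x + a))); last first.
        by have -> : D (alpha x) - a - - (D x + a) = D (alpha x) + D x by ring.
      rewrite (@dvd_iff _ (D (alpha x) + a) (- (D x - a))); last first.
        by have -> : D (alpha x) + a - - (D x - a) = D (alpha x) + D x by ring.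
      by rewrite !rpredN orbC.
    rewrite (@dvd_iff _ (D (alpha x) - a) (D x - a)); last first.
      by have -> : D (alpha x) - a - (D x - a) = D (alpha x) - D x by ring.
    rewrite (@dvd_iff _ (D (alpha x) + a) (D x + a)); last first.
      by have -> : D (alpha x) + a - (D x + a) = D (alpha x) - D x by ring.
    by [].
  - by rewrite /a subrr dvdz0.
case: (boolP (p%:Z %| 2 * a)%Z) => h2a.
  have allD : forall x, (p%:Z %| D x - a)%Z.
    move=> x; case/orP: (allA x) => // h.
    rewrite (@dvd_iff _ _ (D x + a)) //.
    have -> : D x - a - (D x + a) = - (2 * a) by ring.
    by rewrite rpredN.
  have hF0 : forall x, (p%:Z %| F (alpha x, false) - F (x, false) - 1 + lift01 c x * a)%Z.
    move=> x; move: (h0 x) (h1 x) (allD x); rewrite /lift01; case: (c x) => /= a0 a1 ad.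
      have -> : F (alpha x, false) - F (x, false) - 1 + 1 * a =
        (F (alpha x, false) - F (x, true) - 1) + (D x - a) + 2 * a by rewrite /D; ring.
      by apply: rpredD; first apply: rpredD.
    by have -> : F (alpha x, false) - F (x, false) - 1 + 0 * a =
        F (alpha x, false) - F (x, false) - 1 by ring.
  case: (boolP (p%:Z %| a)%Z) => ha.
    left; split=> //; exists (fun x => F (x, false)); split=> // x.
    by apply: (@dvd_lin _ _ _ _ 1 (- lift01 c x) 0 (hF0 x) ha); ring.
  right; have [q [pq [q0 hq]]] := even_case p0 h2a ha.
  exists q; split=> //; split=> //; exists (fun x => F (x, false)); split=> // x.
  rewrite -pq; rewrite -pq in hq.
  by apply: (@dvd_lin _ _ _ _ 1 (- lift01 c x) 0 (hF0 x) hq); ring.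
pose s := fun x => (p%:Z %| D x + a)%Z.
have ls : lc s := @lc1 _ _ _ D (fun k => (p%:Z %| k + a)%Z) lD.
have sA x : s x = ~~ (p%:Z %| D x - a)%Z.
  have two : (p%:Z %| D x + a)%Z -> (p%:Z %| D x - a)%Z -> False.
    move=> u v; move/negP: h2a; apply.
    have -> : 2 * a = (D x + a) - (D x - a) by ring.
    by rewrite rpredB.
  case/orP: (allA x) => h; rewrite /s h.
    by case: (boolP (p%:Z %| D x + a)%Z) => // /two /(_ h).
  by case: (boolP (p%:Z %| D x - a)%Z) => // /(two h).
have sS x : s (alpha x) = addb (s x) (c x).
  have := hD x; case: (c x) => hd.
    rewrite addbT (sA x) negbK /s (@dvd_iff _ _ (- (D x - a))) ?rpredN //.
    by have -> : D (alpha x) + a - - (D x - a) = D (alpha x) + D x by ring.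
  rewrite addbF /s (@dvd_iff _ _ (D x + a)) //.
  by have -> : D (alpha x) + a - (D x + a) = D (alpha x) - D x by ring.
left; split=> //; exists (fun x => F (x, s x)); split.
  have -> : (fun x => F (x, s x)) = fun x => if s x then F (x, true) else F (x, false).
    by apply: funext => x; case: (s x).
  apply: (@lc2 _ _ _ _ (fun x => (s x, F (x, true))) (fun x => F (x, false))
     (fun (pr : bool * int) b => if pr.1 then pr.2 else b)) => //.
  exact: (@lc2 _ _ _ _ s (fun x => F (x, true)) pair).
move=> x /=; rewrite sS; exact: HF (x, s x).
Qed.

Unset Implicit Arguments. Set Strict Implicit.

Theorem lemma4p6 (X : topologicalType) (alpha alphai : X -> X) (c : X -> bool) :
  cantor_minimal alpha alphai -> continuous c ->
  periodic_spectrum alpha <> periodic_spectrum (skew_product alpha c) ->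
  exists n : nat, [/\ (0 < n)%N, periodic_spectrum alpha (2 ^ n.-1)%N, ~ periodic_spectrum alpha (2 ^ n)%N,
    periodic_spectrum (skew_product alpha c) = [set m | exists2 p, periodic_spectrum alpha p & m = (2 * p)%N] `|` periodic_spectrum alpha &
    forall f : X -> int, cont_int f ->
      cobound alphai (fun x => Posz (2 ^ n.-1)%N * f x - 1) ->
      exists g : X -> int, cont_int g /\
        cobound alphai (fun x => lift01 c x - f x - 2 * g x)].
Proof.
move=> hm cc hne.
have [_ [aai aia] ca cai _] := hm.
have [gg gig] := skew_cancel c aai aia.
have cgi := skewi_cont cai cc.
have eP : periodic_spectrum alpha = PSF alpha.
  apply: funext => p; apply: propext; split => h.
    exact: (PS_to_PSF aai aia cai h).
  exact: (PSF_to_PS aai aia h).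
have eQ : periodic_spectrum (skew_product alpha c) = PSF (skew_product alpha c).
  apply: funext => p; apply: propext; split => h.
    exact: (PS_to_PSF gg gig cgi h).
  exact: (PSF_to_PS gg gig h).
rewrite eP eQ in hne *.
have PQ : forall p, PSF alpha p -> PSF (skew_product alpha c) p.
  by move=> p; apply: F1.
have [p0 [Qp0 nPp0]] : exists p0, PSF (skew_product alpha c) p0 /\ ~ PSF alpha p0.
  apply: contrapT => hn; apply: hne; apply: funext => p; apply: propext; split.
    exact: PQ.
  by move=> Qp; apply: contrapT => nP; apply: hn; exists p.
case: (F2 hm cc Qp0) => [/nPp0 //|[q0 [e0 [q00 Wq0]]]].
have [v [u [eq0 ou]]] := odd_decomp q00.
have u0 : (0 < u)%N by move: q00; rewrite eq0 muln_gt0 => /andP[].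
have Pq0 := F4 q00 Wq0.
have Pv : PSF alpha (2 ^ v) by apply: (F5 Pq0); [rewrite eq0 dvdn_mulr | rewrite expn_gt0].
have Pu : PSF alpha u by apply: (F5 Pq0); [rewrite eq0 dvdn_mull | ].
have nPv1 : ~ PSF alpha (2 ^ v.+1).
  move=> h; apply: nPp0.
  have cp : coprime (2 ^ v.+1) u by rewrite coprime_pexpl // coprime2n.
  have := F6 h Pu cp; by rewrite e0 eq0 expnS mulnA.
have Wv : Wq alpha c (2 ^ v) := F7a Wq0 eq0 ou.
exists v.+1 => /=; split => //.
- apply/seteqP; split => m.
    move=> Qm; case: (F2 hm cc Qm) => [Pm|[q [em [q0' Wq']]]]; first by right.
    by left; exists q => //; exact: F4 q0' Wq'.
  case => [[p Pp ->]|Pm]; last exact: PQ.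
  have p0' : (0 < p)%N := Pp.1.
  have [w [t [ep ot]]] := odd_decomp p0'.
  have t0 : (0 < t)%N by move: p0'; rewrite ep muln_gt0 => /andP[].
  have Pt : PSF alpha t by apply: (F5 Pp); [rewrite ep dvdn_mull|].
  case: (ltngtP w v) => hw.
  + have Pw : PSF alpha (2 ^ w.+1) by apply: (F5 Pv); [rewrite dvdn_exp2l | rewrite expn_gt0].
    have cp : coprime (2 ^ w.+1) t by rewrite coprime_pexpl // coprime2n.
    apply: PQ; have := F6 Pw Pt cp; by rewrite ep expnS mulnA.
  + exfalso; apply: nPv1; apply: (F5 Pp); last by rewrite expn_gt0.
    by rewrite ep; apply: dvdn_mulr; rewrite dvdn_exp2l.
  + subst w.
    have cp : coprime (2 * 2 ^ v) t by rewrite -expnS coprime_pexpl // coprime2n.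
    have Wp := F7b Wv Pt ot cp.
    by rewrite ep; apply: F3 => //; rewrite -ep.
- move=> f cf [h [ch eh]].
  have [H [lH HH]] := Wv.
  pose e := fun x => ((H (alpha x) - H x - 1 + lift01 c x * (2 ^ v)%N%:Z) %/ (2 * 2 ^ v)%N%:Z)%Z.
  have lHa : lc (fun x => H (alpha x)) := lc_comp lH ca.
  have lc01 : lc (lift01 c) := @lc1 _ _ _ c (fun b : bool => Posz (nat_of_bool b)) (lc_bool cc).
  exists e; split.
    apply/cont_intP.
    apply: (@lc2 _ _ _ _ (fun x => (H (alpha x), H x)) (lift01 c)
      (fun pr l => ((pr.1 - pr.2 - 1 + l * (2 ^ v)%N%:Z) %/ (2 * 2 ^ v)%N%:Z)%Z)) => //.
    exact: (@lc2 _ _ _ _ _ _ pair lHa lH).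
  have ediv x : e x * (2 * 2 ^ v)%N%:Z = H (alpha x) - H x - 1 + lift01 c x * (2 ^ v)%N%:Z.
    exact: divzK (HH x).
  pose k := fun x => - H (alpha x) - h x.
  have lk : lc k := @lc2 _ _ _ _ _ _ (fun a b => - a - b) lHa (proj1 (cont_intP h) ch).
  have hk x : (2 ^ v)%N%:Z * (lift01 c x - f x - 2 * e x) = k x - k (alphai x).
    have -> : (2 ^ v)%N%:Z * (lift01 c x - f x - 2 * e x) =
       (2 ^ v)%N%:Z * lift01 c x - ((2 ^ v)%N%:Z * f x - 1) - 1 - e x * (2 * 2 ^ v)%N%:Z.
      by rewrite PoszM; ring.
    by rewrite eh ediv /k aia; ring.
  have [k' [lk' hk']] := torsion_free hm (expn_gt0 2 v) lk
     (fun x => ltac:(rewrite -hk; exact: dvdz_mulr (dvdzz _))).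
  exists k'; split; first by apply/cont_intP.
  move=> x /=; apply: (@mulfI _ (2 ^ v)%N%:Z); first by rewrite eqz_nat expn_eq0.
  by rewrite hk hk'.
Qed.
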